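(* Let $(L,\le,(\sqsubseteq_\alpha)_{\alpha<\kappa})$ be a model of Axioms 1–4. Let $\alpha<\kappa$ and let $(x_\beta)_{\beta<\alpha}$ be a partial compatible sequence. Let $x=\bigvee_{\beta<\alpha}x_\beta$. Then: - $x$ is the $\le$-least element of $(x]_\alpha$; - $x\sqsubseteq_\alpha z$ for all $z\in(x]_\alpha$; - the sequence $(y_\delta)_{\delta<\kappa}$, defined by $y_\beta=x_\beta$ for $\beta<\alpha$ and $y_\delta=x$ for $\alpha\le\delta<\kappa$, is a compatible sequence.
   Context: Setting (model of Axioms 1–4). Let $(L,\le)$ be a complete lattice with join operation $\bigvee$ and least element $\perp$. Let $\kappa>0$ be an ordinal, and for each ordinal $\alpha<\kappa$ let $\sqsubseteq_\alpha$ be a preorder on $L$. Derived relation: $x=_\alpha y$ means $x\sqsubseteq_\alpha y$ and $y\sqsubseteq_\alpha x$. Derived sets, for $x\in L$ and $\alpha<\kappa$: - $(x]_\alpha=\{y\in L:\forall\beta<\alpha,\ x=_\beta y\}$. - $[x]_\alpha=\{y\in L: x=_\alpha y\}$. For a set $X$, $X\sqsubseteq_\alpha y$ means $x\sqsubseteq_\alpha y$ for all $x\in X$. The structure is a model of Axioms 1–4 if: - (A1) for all $\alpha<\beta<\kappa$, $x\sqsubseteq_\beta y$ implies $x=_\alpha y$; - (A2) $\bigcap_{\alpha<\kappa}=_\alpha$ is the identity relation on $L$; - (A3) for every $x\in L$, every $\alpha<\kappa$ and every $X\subseteq(x]_\alpha$ there is $y\in(x]_\alpha$ with $X\sqsubseteq_\alpha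 y$ such that for all $z\in(x]_\alpha$ with $X\sqsubseteq_\alpha z$ we have $y\sqsubseteq_\alpha z$ and $y\le z$; - (A4) for every nonempty $X\subseteq L$, every $\alpha<\kappa$ and every $y\in L$, if $y=_\alpha x$ for all $x\in X$ then $y=_\alpha\bigvee X$. A sequence $(x_\alpha)_{\alpha<\kappa}$ in $L$ is compatible if each $x_\alpha$ is the $\le$-least element of $[x_\alpha]_\alpha$ and $x_\alpha=_\alpha x_\beta$ for all $\alpha<\beta<\kappa$. For an ordinal $\alpha\le\kappa$, a sequence $(x_\beta)_{\beta<\alpha}$ is a partial compatible sequence if each $x_\beta$ is the $\le$-least element of $[x_\beta]_\beta$ and $x_\beta=_\beta x_\gamma$ for all $\beta<\gamma<\alpha$. *)

(* Defs.v *)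
From Stdlib Require Import Relations Wellfounded.

Record CLat := {
  car :> Type;
  le : car -> car -> Prop;
  join : (car -> Prop) -> car;
  le_refl : forall x, le x x;
  le_trans : forall x y z, le x y -> le y z -> le x z;
  le_antisym : forall x y, le x y -> le y x -> x = y;
  join_ub : forall (X : car -> Prop) x, X x -> le x (join X);
  join_least : forall (X : car -> Prop) z, (forall x, X x -> le x z) -> le (join X) z
}.

(* The ordinal kappa > 0, represented by a nonempty well-ordered type
   (the ordinals alpha < kappa). *)
Record WOrd := {
  idx :> Type;
  lt : idx -> idx -> Prop;
  lt_irrefl : forall a, ~ lt a a;
  lt_trans : forall a b c, lt a b -> lt b c -> lt a c;
  lt_total : forall a b, lt a b \/ a = b \/ lt b a;
  lt_wf : well_founded lt;
  idx_inhabited : inhabited idx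
}.

Section Model.
Variables (L : CLat) (K : WOrd) (pre : K -> L -> L -> Prop).

Definition eqa (a : K) (x y : L) : Prop := pre a x y /\ pre a y x.
(* y \in (x]_a *)
Definition downset (a : K) (x y : L) : Prop := forall b, lt K b a -> eqa b x y.
(* y \in [x]_a *)
Definition cls (a : K) (x y : L) : Prop := eqa a x y.

Definition least_in (S : L -> Prop) (x : L) : Prop :=
  S x /\ forall y, S y -> le L x y.

Definition is_model : Prop :=
  (forall a x, pre a x x) /\
  (forall a x y z, pre a x y -> pre a y z -> pre a x z) /\
  (* A1 *)
  (forall a b x y, lt K a b -> pre b x y -> eqa a x y) /\
  (* A2 *)
  (forall x y, (forall a, eqa a x y) <-> x = y) /\
  (* A3 *)
  (forall (x : L) (a : K) (X : L -> Prop),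
      (forall y, X y -> downset a x y) ->
      exists y, downset a x y /\ (forall w, X w -> pre a w y) /\
        (forall z, downset a x z -> (forall w, X w -> pre a w z) ->
                   pre a y z /\ le L y z)) /\
  (* A4 *)
  (forall (X : L -> Prop) (a : K) (y : L),
      (exists x, X x) -> (forall x, X x -> eqa a y x) -> eqa a y (join L X)).

(* (s_b)_{b < alpha} is a partial compatible sequence (values of s at b >= alpha irrelevant) *)
Definition partial_compatible (alpha : K) (s : K -> L) : Prop :=
  (forall b, lt K b alpha -> least_in (cls b (s b)) (s b)) /\
  (forall b c, lt K b c -> lt K c alpha -> eqa b (s b) (s c)).

Definition compatible (s : K -> L) : Prop :=
  (forall b, least_in (cls b (s b)) (s b)) /\
  (forall b c, lt K b c -> eqa b (s b) (s c)).

End Model.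

(* Main.v *)
Require Import Defs.

Theorem mainTheorem11 (L : CLat) (K : WOrd) (pre : K -> L -> L -> Prop)
  (hmodel : is_model L K pre) (alpha : K) (xs : K -> L)
  (hxs : partial_compatible L K pre alpha xs) :
  let x := join L (fun l => exists b, lt K b alpha /\ l = xs b) in
  least_in L (downset L K pre alpha x) x /\
  (forall z, downset L K pre alpha x z -> pre alpha x z) /\
  (forall ys : K -> L,
     (forall d, lt K d alpha -> ys d = xs d) ->
     (forall d, ~ lt K d alpha -> ys d = x) ->
     compatible L K pre ys).
Proof.
  destruct hmodel as [Hrefl [Htr [HA1 [HA2 [HA3 HA4]]]]].
  destruct hxs as [Hleast Hcomp].
  intros x.
  assert (Erefl : forall a u, eqa L K pre a u u) by (intros; split; apply Hrefl).
  assert (Esym : forall a u v, eqa L K pre a u v -> eqa L K pre a v u)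
    by (intros a u v [h1 h2]; split; assumption).
  assert (Etr : forall a u v w, eqa L K pre a u v -> eqa L K pre a v w -> eqa L K pre a u w)
    by (intros a u v w [h1 h2] [h3 h4]; split; eapply Htr; eauto).
  assert (Mono : forall c b, lt K c b -> lt K b alpha -> le L (xs c) (xs b)).
  { intros c b hcb hb. destruct (Hleast c (lt_trans K _ _ _ hcb hb)) as [_ h].
    apply h. apply Hcomp; auto. }
  assert (Hx : forall b, lt K b alpha -> eqa L K pre b (xs b) x).
  { intros b hb.
    set (T := fun l => exists c, (c = b \/ lt K b c) /\ lt K c alpha /\ l = xs c).
    assert (HxT : x = join L T).
    { apply le_antisym.
      - apply join_least. intros l [c [hc ->]].
        destruct (lt_total K c b) as [h | [h | h]].
        + eapply le_trans. apply (Mono c b h hb). apply join_ub. exists b; auto.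
        + apply join_ub. exists c; auto.
        + apply join_ub. exists c; auto.
      - apply join_least. intros l [c [_ [hc ->]]]. apply join_ub. exists c; auto. }
    rewrite HxT. apply HA4.
    - exists (xs b). exists b; auto.
    - intros l [c [[<- | hbc] [hc ->]]]. apply Erefl. apply Hcomp; auto. }
  assert (Hdx : downset L K pre alpha x x) by (intros b _; apply Erefl).
  assert (C1 : least_in L (downset L K pre alpha x) x).
  { split; auto. intros z hz. apply join_least. intros l [b [hb ->]].
    destruct (Hleast b hb) as [_ h]. apply h. eapply Etr. apply Hx; auto. apply hz; auto. }
  split; [exact C1|].
  assert (C2 : forall z, downset L K pre alpha x z -> pre alpha x z).
  { destruct (HA3 x alpha (fun _ => False)) as [y [hy [_ hyz]]]. intros _ [].
    assert (x = y).
    { apply le_antisym. apply (proj2 C1 y hy). apply (hyz x Hdx). intros _ []. }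
    subst y. intros z hz. apply (hyz z hz). intros _ []. }
  split; [exact C2|].
  intros ys H1 H2. split.
  - intros b. destruct (lt_total K b alpha) as [h|h].
    + rewrite (H1 b h). apply Hleast; auto.
    + assert (hn : ~ lt K b alpha).
      { intro h'. destruct h as [<- | h]. apply (lt_irrefl K b h').
        apply (lt_irrefl K b). eapply lt_trans; eauto. }
      rewrite (H2 b hn). split. apply Erefl.
      intros y hy. apply (proj2 C1). intros c hc.
      destruct h as [<- | h].
      * exact (HA1 c b x y hc (proj1 hy)).
      * exact (HA1 c b x y (lt_trans K _ _ _ hc h) (proj1 hy)).
  - intros b c hbc. destruct (lt_total K c alpha) as [hc | hc].
    + rewrite (H1 b (lt_trans K _ _ _ hbc hc)), (H1 c hc). apply Hcomp; auto.
    + assert (hn : ~ lt K c alpha).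
      { intro h'. destruct hc as [<- | h]. apply (lt_irrefl K c h').
        apply (lt_irrefl K c). eapply lt_trans; eauto. }
      rewrite (H2 c hn).
      destruct (lt_total K b alpha) as [hb | hb].
      * rewrite (H1 b hb). apply Hx; auto.
      * assert (hn' : ~ lt K b alpha).
        { intro h'. destruct hb as [<- | h]. apply (lt_irrefl K b h').
          apply (lt_irrefl K b). eapply lt_trans; eauto. }
        rewrite (H2 b hn'). apply Erefl.
Qed.
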